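(* Consider any instance of the rescheduling problem $(1, h_1 \mid \Delta_{\max}\le k \mid \mu\Delta_{\max} + \sum_{j=1}^n w_j C_j)$ described in the context, and suppose it admits at least one feasible schedule. Then there exists an optimal schedule $\sigma^*$ such that: (a) $C_j(\sigma^* )\le C_j(\pi^* )$ for each job $J_j$ in the earlier schedule; (b) the earlier schedule contains at most one idle period; (c) each job in the earlier schedule that is processed after the idle period is processed exactly $\Delta_{\max}(\sigma^* )$ time units earlier than in $\pi^*$, i.e. $C_j(\pi^* )-C_j(\sigma^* )=\Delta_{\max}(\sigma^* )$; (d) the jobs in the earlier schedule processed after the idle period have consecutive indices $J_i,J_{i+1},\dots,J_{i+m}$; (e) the job $J_j$ of the earlier schedule processed immediately after the idle period satisfies $S_j(\pi^* )\ge T_2$; (f) the machine does not idle in the later schedule; (g) the first job in the later schedule has the maximum time deviation $\Delta_j$ among all jobs in the later schedule.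
   Context: An instance consists of $n$ jobs $J_1,\dots,J_n$, where $J_j$ has a positive integer processing time $p_j$ and a positive integer weight $w_j$, indexed in WSPT order $p_1/w_1\le\cdots\le p_n/w_n$; integers $T_1,T_2$ with $0\le T_1<T_2$ (machine unavailable during $[T_1,T_2]$); an integer $k$; a rational $\mu\ge 0$. The original schedule $\pi^*$ processes $J_1,\dots,J_n$ in order consecutively from time $0$ without idle time, so $S_j(\pi^* )=\sum_{i<j}p_i$, $C_j(\pi^* )=\sum_{i\le j}p_i$. A schedule $\sigma$ assigns start times $S_j(\sigma)\ge0$, non-preemptive single-machine processing with $C_j(\sigma)=S_j(\sigma)+p_j$, no overlaps, and each job has $C_j(\sigma)\le T_1$ or $S_j(\sigma)\ge T_2$. $\Delta_j=|C_j(\sigma)-C_j(\pi^* )|$, $\Delta_{\max}=\max_j\Delta_j$. Feasible means $\Delta_{\max}\le k$; optimal means feasible and minimizing $\mu\Delta_{\max}+\sum_j w_jC_j(\sigma)$. The earlier schedule consists of jobs with $C_j(\sigma)\le T_1$; the later schedule of jobs completed after $T_2$. An idle period of the earlier schedule is a maximal time interval of positive length, contained in $[0,c]$ where $c$ is the largest completion time of an earlier-schedule job, during which no job is processed. The machine idles in the later schedule if some time interval of positive length within $[T_2,c']$, where $c'$ is the largest completion time of a later-schedule job, contains no processing. Standing assumptions: some job has $C_j(\pi^* )>T_1$; with $j_1$ the smallest such index, $p_{\min}\le T_1<P$ and $T_2-S_{j_1}(\pi^* )\le k$, where $p_{\min}=\min_jp_j$, $P=\sum_jp_j$. *)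

(* Defs.v *)
From mathcomp Require Import all_boot all_order all_algebra.
From mathcomp Require Import reals.
Set Implicit Arguments. Unset Strict Implicit. Unset Printing Implicit Defensive.
Import Order.TTheory GRing.Theory Num.Theory.
Local Open Scope ring_scope.

Section Resched.
Variable R : realType.
Variable n : nat.
Variables (p w : 'I_n -> nat).
Variables (T1 T2 : nat).

Definition SstarN (j : 'I_n) : nat := (\sum_(i < n | (i < j)%N) p i)%N.
Definition CstarN (j : 'I_n) : nat := (\sum_(i < n | (i <= j)%N) p i)%N.
Definition Ptot : nat := (\sum_(i < n) p i)%N.

Definition Cj (S : 'I_n -> R) (j : 'I_n) : R := S j + (p j)%:R.

Definition valid_schedule (S : 'I_n -> R) : Prop :=
  (forall j, 0 <= S j) /\
  (forall i j, i != j -> Cj S i <= S j \/ Cj S j <= S i) /\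
  (forall j, Cj S j <= T1%:R \/ T2%:R <= S j).

Definition Delta (S : 'I_n -> R) (j : 'I_n) : R := `|Cj S j - (CstarN j)%:R|.
Definition Dmax (S : 'I_n -> R) : R := \big[Num.max/0]_(j < n) Delta S j.

Definition feasible (k : int) (S : 'I_n -> R) : Prop :=
  valid_schedule S /\ Dmax S <= k%:~R.

Definition objective (mu : rat) (S : 'I_n -> R) : R :=
  ratr mu * Dmax S + \sum_(j < n) (w j)%:R * Cj S j.

Definition optimal (k : int) (mu : rat) (S : 'I_n -> R) : Prop :=
  feasible k S /\ forall S', feasible k S' -> objective mu S <= objective mu S'.

Definition early (S : 'I_n -> R) (j : 'I_n) : bool := Cj S j <= T1%:R.
Definition later (S : 'I_n -> R) (j : 'I_n) : bool := T2%:R < Cj S j.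

Definition cEarly (S : 'I_n -> R) : R := \big[Num.max/0]_(j < n | early S j) Cj S j.
Definition cLater (S : 'I_n -> R) : R := \big[Num.max/T2%:R]_(j < n | later S j) Cj S j.

Definition free (S : 'I_n -> R) (a b : R) : Prop :=
  forall j, Cj S j <= a \/ b <= S j.

Definition idle_period (S : 'I_n -> R) (a b : R) : Prop :=
  [/\ 0 <= a, a < b, b <= cEarly S, free S a b &
   forall a' b', 0 <= a' -> a' <= a -> b <= b' -> b' <= cEarly S ->
     free S a' b' -> a' = a /\ b' = b].

Definition later_idles (S : 'I_n -> R) : Prop :=
  exists x y, [/\ T2%:R <= x, x < y, y <= cLater S & free S x y].
End Resched.

(* Main.v *)
Require Import Defs.
From mathcomp Require Import all_boot all_order all_algebra.
From mathcomp Require Import reals.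
From mathcomp Require Import zify ring lra.
From Stdlib Require Import FunctionalExtensionality.
Import Order.TTheory GRing.Theory Num.Theory.
Set Implicit Arguments. Unset Strict Implicit. Unset Printing Implicit Defensive.
Local Open Scope ring_scope.

Set Default Proof Using "All".
Section Aux.
Variable R : realType.
Variable n : nat.
Variables (p w : 'I_n -> nat).
Variables (T1 T2 : nat).
Hypothesis p_pos : forall j, (0 < p j)%N.
Hypothesis w_pos : forall j, (0 < w j)%N.
Hypothesis wspt : forall i j : 'I_n, (i <= j)%N -> (p i * w j <= p j * w i)%N.
Hypothesis hT : (T1 < T2)%N.


Lemma start_neq (S : 'I_n -> R)
  (hv : forall i j, i != j -> Cj p S i <= S j \/ Cj p S j <= S i) i j :
  i != j -> S i != S j.
Proof.
move=> hij; apply/negP=> /eqP e.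
have hi : (0:R) < (p i)%:R by rewrite ltr0n.
have hj : (0:R) < (p j)%:R by rewrite ltr0n.
case: (hv _ _ hij); rewrite /Cj e; lra.
Qed.

Lemma fit (S : 'I_n -> R)
  (hv : forall i j, i != j -> Cj p S i <= S j \/ Cj p S j <= S i)
  (A : pred 'I_n) (r : R) (hr : forall i, A i -> r <= S i) :
  forall j, r <= S j -> r + (\sum_(i < n | A i && (S i < S j)) (p i)%:R) <= S j.
Proof.
suff H : forall (m : nat) (j : 'I_n), (#|[pred i | A i && (S i < S j)%R]| <= m)%N -> r <= S j ->
   r + \sum_(i < n | A i && (S i < S j)) (p i)%:R <= S j.
  by move=> j; apply: H (leqnn _).
elim=> [|m IH] j.
  rewrite leqn0 => /eqP /card0_eq h0 hrj.
  rewrite big_pred0 ?addr0 // => i; exact: h0.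
move=> hc hrj.
case: (pickP [pred i | A i && (S i < S j)]) => [i0 hi0 | h0]; last first.
  by rewrite big_pred0 ?addr0.
case: (@arg_maxP _ R _ i0 [pred i | A i && (S i < S j)] S hi0) => im /andP[Ais ltis] hmax.
have eqP' : forall i, (A i && (S i < S j)) && (i != im) = A i && (S i < S im).
  move=> i; apply/idP/idP.
    case/andP=> /andP[Ai lij] nis; rewrite Ai /=.
    have := hmax i; rewrite /= Ai lij => /(_ isT) le1.
    by rewrite lt_neqAle le1 andbT (start_neq hv nis).
  case/andP=> Ai lt; rewrite Ai /= (lt_trans lt ltis) /=.
  by apply/negP=> /eqP e; move: lt; rewrite e ltxx.
rewrite (bigD1 im) /=; last by rewrite Ais ltis.
rewrite (eq_bigl _ _ eqP').
have hc' : (#|[pred i | A i && (S i < S im)%R]| <= m)%N.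
  move: hc; rewrite (cardD1 im) inE /= Ais ltis /= add1n ltnS.
  apply: leq_trans; apply: subset_leq_card; apply/subsetP=> i.
  by rewrite !inE -eqP' /= andbC.
have := IH im hc' (hr _ Ais).
have hisj : im != j by apply/negP=> /eqP e; move: ltis; rewrite e ltxx.
case: (hv _ _ hisj); rewrite /Cj.
  lra.
have : (0:R) < (p j)%:R by rewrite ltr0n.
lra.
Qed.



Lemma pair_sum_ge0 (G : 'I_n -> 'I_n -> R)
  (hd : forall j, 0 <= G j j) (ho : forall l j : 'I_n, (l < j)%N -> 0 <= G j l + G l j) :
  0 <= \sum_(j < n) \sum_(l < n) G j l.
Proof.
have e : forall j l, G j l = ((if (l < j)%N then G j l else 0) + (if l == j then G j l else 0))
                            + (if (j < l)%N then G j l else 0).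
  move=> j l; case: (ltngtP l j) => h.
  - have -> : (l == j) = false by apply/negP=> /eqP e; move: h; rewrite e ltnn.
    by rewrite !addr0.
  - have -> : (l == j) = false by apply/negP=> /eqP e; move: h; rewrite e ltnn.
    by rewrite !add0r.
  - have e : l = j by apply/val_inj.
    by rewrite e eqxx add0r addr0.
rewrite (eq_bigr (fun j : 'I_n => \sum_(l < n) (((if (l < j)%N then G j l else 0) + (if l == j then G j l else 0))
                            + (if (j < l)%N then G j l else 0)))); last first.
  by move=> j _; apply: eq_bigr => l _; rewrite -e.
under eq_bigr => j _ do rewrite big_split /=.
rewrite big_split /= exchange_big /=.
under eq_bigr => j _ do rewrite big_split /=.
rewrite big_split /= -addrA [X in _ + X]addrC addrA -big_split /=.
apply: addr_ge0; apply: sumr_ge0 => j _.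
  rewrite -big_split /=; apply: sumr_ge0 => l _.
  by case: ifP => h; rewrite ?addr0 //; apply: ho.
by apply: sumr_ge0 => l _; case: eqP => [->|]; rewrite ?lexx.
Qed.


Lemma pairwise (A : pred 'I_n) (X B : 'I_n -> 'I_n -> bool)
  (hXt : forall i j, X i j || X j i) (hXd : forall j, X j j)
  (hBd : forall j, B j j) (hB : forall l j : 'I_n, (l < j)%N -> B l j) :
  \sum_(j < n | A j) (w j)%:R * (\sum_(l < n | A l && B j l && (l <= j)%N) (p l)%:R : R)
  <= \sum_(j < n | A j) (w j)%:R * \sum_(l < n | A l && B j l && X l j) (p l)%:R.
Proof.
rewrite -subr_ge0 -sumrB.
pose G := fun j l : 'I_n => if A j && A l && B j l then
   (w j)%:R * (p l)%:R * (((X l j : nat)%:R : R) - ((l <= j)%N : nat)%:R) else 0.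
have -> : \sum_(j < n | A j) ((w j)%:R * \sum_(l < n | A l && B j l && X l j) (p l)%:R -
     (w j)%:R * \sum_(l < n | A l && B j l && (l <= j)%N) (p l)%:R) = \sum_(j < n) \sum_(l < n) G j l.
  rewrite big_mkcond /=; apply: eq_bigr => j _.
  rewrite (big_mkcond (fun l => A l && B j l && X l j)) (big_mkcond (fun l => A l && B j l && (l <= j)%N)) /=.
  rewrite -mulrBr -sumrB big_distrr /= [RHS]big_mkcond /=.
  rewrite /G; case: (A j) => /=; last by rewrite big1_eq.
  apply: eq_bigr => l _.
  by case: (A l); case: (B j l); case: (X l j); case: (l <= j)%N => /=;
     rewrite ?subrr ?mulr0 ?subr0 ?sub0r ?mulr1 ?mulrN ?mulr0 ?mulrA ?mulr1 ?mulrN1 ?mulNr ?subr0 ?sub0r //; lra.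
apply: pair_sum_ge0.
  by move=> j; rewrite /G hXd leqnn subrr mulr0; case: ifP.
move=> l j hlj; rewrite /G (hB _ _ hlj) andbT.
have -> : (j <= l)%N = false by apply/negbTE; rewrite -ltnNge.
rewrite subr0 (ltnW hlj) [A l && A j]andbC.
have hw : ((w j)%:R * (p l)%:R : R) <= (w l)%:R * (p j)%:R.
  by rewrite -!natrM ler_nat mulnC [(w l * _)%N]mulnC; apply: wspt; apply: ltnW.
case: (A j && A l) => /=; last by rewrite addr0.
have h0 : (0:R) <= (w j)%:R * (p l)%:R by apply: mulr_ge0; apply: ler0n.
have h1 : (0:R) <= (w l)%:R * (p j)%:R by apply: mulr_ge0; apply: ler0n.
move: (hXt l j); case: (X l j); case: (X j l); case: (B j l) => //= _;
  rewrite ?subrr ?mulr0 ?mulr1 ?add0r ?addr0 ?sub0r ?mulrN1 //; lra.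
Qed.


Definition pn (l : nat) : nat := oapp p 0%N (insub l).
Definition EnB (E : pred 'I_n) (l : nat) : bool := oapp E false (insub l).

Lemma pnE (i : 'I_n) : pn i = p i.
Proof. by rewrite /pn; case: insubP => [j _ /val_inj -> // | ]; rewrite ltn_ord. Qed.
Lemma EnBE E (i : 'I_n) : EnB E i = E i.
Proof. by rewrite /EnB; case: insubP => [j _ /val_inj -> // | ]; rewrite ltn_ord. Qed.
Lemma EnB_lt E l : EnB E l -> (l < n)%N.
Proof. by rewrite /EnB; case: insubP. Qed.

Definition Sst (l : nat) : nat := \sum_(0 <= i < l) pn i.
Definition sE E l : nat := \sum_(0 <= i < l) (if EnB E i then pn i else 0).
Definition sL E l : nat := \sum_(0 <= i < l) (if EnB E i then 0 else pn i).

Lemma sEL E l : (sE E l + sL E l)%N = Sst l.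
Proof.
rewrite /sE /sL /Sst -big_split /=; apply: eq_bigr => i _.
by case: ifP; rewrite ?addn0.
Qed.

Lemma SstS l : Sst l.+1 = (Sst l + pn l)%N.
Proof. by rewrite /Sst big_nat_recr. Qed.
Lemma sES E l : sE E l.+1 = (sE E l + if EnB E l then pn l else 0)%N.
Proof. by rewrite /sE big_nat_recr. Qed.
Lemma sLS E l : sL E l.+1 = (sL E l + if EnB E l then 0 else pn l)%N.
Proof. by rewrite /sL big_nat_recr. Qed.

Lemma Sst_mono l l' : (l <= l')%N -> (Sst l <= Sst l')%N.
Proof. by move=> h; rewrite /Sst (big_cat_nat (leq0n l) h) /= leq_addr. Qed.
Lemma sE_mono E l l' : (l <= l')%N -> (sE E l <= sE E l')%N.
Proof. by move=> h; rewrite /sE (big_cat_nat (leq0n l) h) /= leq_addr. Qed.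
Lemma sL_mono E l l' : (l <= l')%N -> (sL E l <= sL E l')%N.
Proof. by move=> h; rewrite /sL (big_cat_nat (leq0n l) h) /= leq_addr. Qed.

Lemma sum_ord_nat (F : nat -> nat) l : (l <= n)%N ->
  \sum_(i < n | (i < l)%N) F i = \sum_(0 <= i < l) F i.
Proof. by move=> hl; rewrite (big_nat_widen 0 l n) // big_mkord. Qed.

Lemma SstarNE (j : 'I_n) : SstarN p j = Sst j.
Proof.
rewrite /SstarN /Sst -sum_ord_nat ?(ltnW (ltn_ord j)) //.
by apply: eq_bigr => i _; rewrite pnE.
Qed.
Lemma CstarNE (j : 'I_n) : CstarN p j = Sst j.+1.
Proof.
rewrite /CstarN /Sst -sum_ord_nat ?ltn_ord //.
by apply: eq_bigr => i _; rewrite pnE.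
Qed.
Lemma PtotE : Ptot p = Sst n.
Proof.
rewrite /Ptot /Sst big_mkord; by apply: eq_bigr => i _; rewrite pnE.
Qed.

Lemma sum_pred (P : pred 'I_n) l : (l <= n)%N ->
  \sum_(i < n | P i && (i < l)%N) p i = \sum_(0 <= i < l) (if EnB P i then pn i else 0).
Proof.
move=> hl; rewrite -(sum_ord_nat (fun i => if EnB P i then pn i else 0)) //.
rewrite big_mkcond [RHS]big_mkcond; apply: eq_bigr => i _.
by rewrite EnBE pnE; case: (P i); case: (i < l)%N.
Qed.

Fixpoint tg (E : pred 'I_n) (D : R) (l : nat) : R :=
  if l is l'.+1 then
    (if EnB E l' then Num.max (tg E D l') ((Sst l')%:R - D) + (pn l')%:R else tg E D l')
  else 0.

Fixpoint bg (E : pred 'I_n) (D : R) (l : nat) : nat :=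
  if l is l'.+1 then
    (if EnB E l' && (tg E D l' < (Sst l')%:R - D) then l' else bg E D l')
  else 0%N.

Lemma tg_ge0 E D l : 0 <= tg E D l.
Proof.
elim: l => [|l IH] //=; case: ifP => _ //.
by apply: addr_ge0; [rewrite le_max IH | apply: ler0n].
Qed.

Lemma tg_monoS E D l : tg E D l <= tg E D l.+1.
Proof.
rewrite /=; case: ifP => _ //.
have := ler0n R (pn l); have := le_max (tg E D l) (tg E D l) ((Sst l)%:R - D).
rewrite lexx /= => /esym h; lra.
Qed.

Lemma tg_mono E D l l' : (l <= l')%N -> tg E D l <= tg E D l'.
Proof.
move=> /subnK <-; elim: (l' - l)%N => [|m IH] //=.
exact: le_trans IH (tg_monoS _ _ _).
Qed.

Lemma tg_ge_sE E D l : (sE E l)%:R <= tg E D l.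
Proof.
elim: l => [|l IH]; first by rewrite /sE big_geq.
rewrite sES /=; case: ifP => _; rewrite ?addn0 // natrD.
have := le_max (tg E D l) (tg E D l) ((Sst l)%:R - D); rewrite lexx /= => /esym h; lra.
Qed.

Lemma tg_le_Sst E D l : 0 <= D -> tg E D l <= (Sst l)%:R.
Proof.
move=> hD; elim: l => [|l IH]; first by rewrite /Sst big_geq.
rewrite SstS natrD /=; case: ifP => _.
  rewrite lerD2r ge_max IH /=; lra.
have := ler0n R (pn l); lra.
Qed.

Lemma bg_le E D l : (bg E D l <= l)%N.
Proof.
elim: l => [|l IH] //=; case: ifP => _ //; exact: leqW.
Qed.

Lemma bg_prop E D l : bg E D l = 0%N \/ ((bg E D l < l)%N && EnB E (bg E D l)).
Proof.
elim: l => [|l IH] /=; first by left.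
case: ifP => [/andP[h _]|_]; first by right; rewrite ltnSn h.
case: IH => [->|/andP[h1 h2]]; first by left.
by right; rewrite h2 ltnS ltnW.
Qed.

Lemma tg_rep E D l : 0 <= D ->
  tg E D l = Num.max 0 ((Sst (bg E D l))%:R - D)
             + (\sum_(bg E D l <= i < l) (if EnB E i then pn i else 0))%:R.
Proof.
move=> hD; elim: l => [|l IH].
  rewrite /= big_geq // /Sst big_geq // addr0 sub0r.
  by apply/esym/max_l; rewrite oppr_le0.
rewrite [tg _ _ _.+1]/= [bg _ _ _.+1]/=.
case e: (EnB E l) => /=.
  case: ltP => hlt.
    rewrite big_nat1 e max_r; last by have := tg_ge0 E D l; lra.
    by [].
  rewrite (big_nat_recr _ _ _ (bg_le E D l)) /= e natrD addrA IH //.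
rewrite (big_nat_recr _ _ _ (bg_le E D l)) /= e addn0 //.
Qed.

Definition fS E D (j : 'I_n) : R :=
  if E j then Num.max (tg E D j) ((Sst j)%:R - D) else (T2 + sL E j)%:R.

Lemma fC E D j : Cj p (fS E D) j = if E j then tg E D j.+1 else (T2 + sL E j.+1)%:R.
Proof.
rewrite /Cj /fS /= sLS !EnBE pnE; case: (E j) => //.
by rewrite -natrD addnA.
Qed.

Lemma Dmax_le (S : 'I_n -> R) c : 0 <= c -> (forall j, Delta p S j <= c) -> Dmax p S <= c.
Proof.
move=> h0 h; rewrite /Dmax; elim/big_ind: _ => // x y hx hy.
by rewrite ge_max hx hy.
Qed.

Lemma le_Dmax (S : 'I_n -> R) j : Delta p S j <= Dmax p S.
Proof. by rewrite /Dmax (bigD1 j) //= le_max lexx. Qed.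

Lemma Dmax_ge0 (S : 'I_n -> R) : 0 <= Dmax p S.
Proof.
rewrite /Dmax; elim/big_ind: _ => // [x y hx hy|j _]; first by rewrite le_max hx.
exact: normr_ge0.
Qed.

Lemma tg_last (E : pred 'I_n) (D : R) (j : 'I_n) : tg E D j.+1 <= tg E D n.
Proof. by apply: tg_mono; rewrite ltn_ord. Qed.

Lemma fC_E (E : pred 'I_n) (D : R) j : E j -> Cj p (fS E D) j = tg E D j.+1.
Proof. by move=> h; rewrite fC h. Qed.
Lemma fC_L (E : pred 'I_n) (D : R) j : ~~ E j -> Cj p (fS E D) j = (T2 + sL E j.+1)%:R.
Proof. by move=> h; rewrite fC (negbTE h). Qed.

Lemma tgS_E (E : pred 'I_n) (D : R) (j : 'I_n) : E j ->
  tg E D j.+1 = Num.max (tg E D j) ((Sst j)%:R - D) + (p j)%:R.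
Proof. by move=> h; rewrite /= EnBE h pnE. Qed.

Lemma tgS_nE (E : pred 'I_n) (D : R) (j : nat) : ~~ EnB E j -> tg E D j.+1 = tg E D j.
Proof. by move=> h; rewrite /= (negbTE h). Qed.

Lemma sLS_L (E : pred 'I_n) (j : 'I_n) : ~~ E j -> sL E j.+1 = (sL E j + p j)%N.
Proof. by move=> h; rewrite sLS EnBE (negbTE h) pnE. Qed.
Lemma sES_L (E : pred 'I_n) (j : 'I_n) : ~~ E j -> sE E j.+1 = sE E j.
Proof. by move=> h; rewrite sES EnBE (negbTE h) addn0. Qed.

Lemma sE_le_tg (E : pred 'I_n) (D : R) : (sE E n)%:R <= tg E D n.
Proof. exact: tg_ge_sE. Qed.

Section FS.
Variables (E : pred 'I_n) (D : R).
Hypothesis hD : 0 <= D.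
Hypothesis hfit : tg E D n <= T1%:R.

Lemma T12 : (T1%:R : R) < T2%:R.
Proof. by rewrite ltr_nat. Qed.

Lemma fS_valid : valid_schedule p T1 T2 (fS E D).
Proof.
have T12 := T12.
split; [|split].
- move=> j; rewrite /fS; case: (E j); last exact: ler0n.
  by rewrite le_max tg_ge0.
- move=> i j hij.
  have keyE : forall a b : 'I_n, E a -> E b -> (a < b)%N -> Cj p (fS E D) a <= fS E D b.
    move=> a b Ea Eb hab; rewrite fC /fS Ea Eb.
    apply: le_trans (tg_mono E D hab) _; by rewrite le_max lexx.
  have keyL : forall a b : 'I_n, ~~ E a -> ~~ E b -> (a < b)%N -> Cj p (fS E D) a <= fS E D b.
    move=> a b Ea Eb hab; rewrite fC /fS (negbTE Ea) (negbTE Eb).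
    by rewrite ler_nat leq_add2l; apply: sL_mono.
  have keyEL : forall a b : 'I_n, E a -> ~~ E b -> Cj p (fS E D) a <= fS E D b.
    move=> a b Ea Eb; rewrite fC /fS Ea (negbTE Eb).
    have : (T2%:R : R) <= (T2 + sL E b)%:R by rewrite ler_nat leq_addr.
    move=> h; apply: le_trans h; apply: le_trans (tg_last E D a) _.
    by apply: le_trans hfit _; apply: ltW.
  case Ei: (E i); case Ej: (E j).
  + case: (ltngtP i j) => h.
    * by left; apply: keyE.
    * by right; apply: keyE.
    * by move: hij; rewrite (val_inj h) eqxx.
  + by left; apply: keyEL; rewrite ?Ej.
  + by right; apply: keyEL; rewrite ?Ei.
  + case: (ltngtP i j) => h.
    * by left; apply: keyL; rewrite ?Ei ?Ej.
    * by right; apply: keyL; rewrite ?Ei ?Ej.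
    * by move: hij; rewrite (val_inj h) eqxx.
- move=> j; rewrite fC /fS; case: (E j).
  + by left; apply: le_trans (tg_last _ _ _) hfit.
  + by right; rewrite ler_nat leq_addr.
Qed.

Lemma sE_T1 : (sE E n < T2)%N.
Proof.
have h := le_trans (sE_le_tg E D) hfit; rewrite ler_nat in h.
exact: leq_ltn_trans h hT.
Qed.

Lemma early_fS j : early p T1 (fS E D) j = E j.
Proof.
rewrite /early fC; case Ej: (E j); first by apply: le_trans (tg_last _ _ _) hfit.
apply/negbTE; rewrite -ltNge ltr_nat; apply: leq_trans hT _; exact: leq_addr.
Qed.

Lemma later_fS j : later p T2 (fS E D) j = ~~ E j.
Proof.
rewrite /later fC; case Ej: (E j) => /=.
  apply/negbTE; rewrite -leNgt; apply: le_trans (tg_last _ _ _) _.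
  by apply: le_trans hfit _; apply: ltW; exact: T12.
rewrite ltr_nat sLS_L ?Ej //; have := p_pos j; lia.
Qed.

Lemma dev_E j : E j -> Delta p (fS E D) j = (Sst j.+1)%:R - tg E D j.+1.
Proof.
move=> Ej; rewrite /Delta fC_E // CstarNE distrC ger0_norm // subr_ge0.
exact: tg_le_Sst.
Qed.

Lemma tg_ge_rel (j : 'I_n) : E j -> (Sst j.+1)%:R - D <= tg E D j.+1.
Proof.
move=> Ej; rewrite tgS_E // SstS natrD pnE.
have := le_max ((Sst j)%:R - D) (tg E D j) ((Sst j)%:R - D); rewrite lexx orbT => /esym h.
lra.
Qed.

Lemma dev_E_le j : E j -> Delta p (fS E D) j <= D.
Proof. by move=> Ej; rewrite dev_E //; have := tg_ge_rel Ej; lra. Qed.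

Lemma dev_L j : ~~ E j -> Delta p (fS E D) j = T2%:R - (sE E j)%:R.
Proof.
move=> Ej; rewrite /Delta fC_L // CstarNE -(sEL E j.+1) sES_L //.
have -> : ((T2 + sL E j.+1)%:R - (sE E j + sL E j.+1)%:R : R) = T2%:R - (sE E j)%:R.
  rewrite !natrD; lra.
rewrite ger0_norm // subr_ge0 ler_nat; apply: ltnW; apply: leq_ltn_trans sE_T1.
by apply: sE_mono; apply: ltnW.
Qed.

Lemma Dmax_fS (hL : forall j, ~~ E j -> T2%:R - (sE E j)%:R <= D) : Dmax p (fS E D) <= D.
Proof.
apply: Dmax_le => // j; case Ej: (E j); first exact: dev_E_le.
by rewrite dev_L ?Ej //; apply: hL; rewrite Ej.
Qed.

End FS.

Lemma bg_ltS (E : pred 'I_n) (D : R) l : (bg E D l.+1 <= l)%N.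
Proof. by case: (bg_prop E D l.+1) => [->//|/andP[h _]]; rewrite -ltnS. Qed.

Lemma sum_range (P : pred 'I_n) b l : (l <= n)%N ->
  \sum_(b <= i < l) (if EnB P i then pn i else 0)
  = \sum_(i < n | P i && (b <= i)%N && (i < l)%N) p i.
Proof.
move=> hl; rewrite (big_nat_widenl _ _ _ _ _ (leq0n b)) (big_nat_widen 0 l n) // big_mkord.
rewrite big_mkcond [RHS]big_mkcond; apply: eq_bigr => i _ /=.
by rewrite EnBE pnE; case: (P i); case: (b <= i)%N; case: (i < l)%N.
Qed.

Lemma sum_predL (E : pred 'I_n) l : (l <= n)%N ->
  sL E l = \sum_(i < n | ~~ E i && (i < l)%N) p i.
Proof.
move=> hl; rewrite /sL -(sum_ord_nat (fun i => if EnB E i then 0%N else pn i)) //.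
rewrite big_mkcond [RHS]big_mkcond; apply: eq_bigr => i _.
by rewrite EnBE pnE; case: (E i); case: (i < l)%N.
Qed.

Section Dom.
Variable S : 'I_n -> R.
Hypothesis hv : forall i j, i != j -> Cj p S i <= S j \/ Cj p S j <= S i.

Lemma sum_split_le (A : pred 'I_n) j : A j ->
  \sum_(i < n | A i && (S i <= S j)) (p i)%:R
  = (p j)%:R + \sum_(i < n | A i && (S i < S j)) (p i)%:R :> R.
Proof.
move=> Aj; rewrite (bigD1 j) /=; last by rewrite Aj lexx.
congr (_ + _); apply: eq_bigl => i.
case Ai: (A i) => //=; apply/idP/idP.
  by case/andP=> h1 h2; rewrite lt_neqAle h1 (start_neq hv h2).
move=> h; rewrite (ltW h) /=; apply/negP=> /eqP e; by move: h; rewrite e ltxx.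
Qed.

Lemma fit2 (A : pred 'I_n) r (hr : forall i, A i -> r <= S i) j : A j ->
  r + \sum_(i < n | A i && (S i <= S j)) (p i)%:R <= Cj p S j.
Proof.
move=> Aj; rewrite sum_split_le // /Cj.
have := fit hv hr (hr j Aj); lra.
Qed.

Lemma fitmax (A : pred 'I_n) r (hr : forall i, A i -> r <= S i) j0 : A j0 ->
  exists2 j, A j & r + \sum_(i < n | A i) (p i)%:R <= Cj p S j.
Proof.
move=> Aj0.
case: (@arg_maxP _ R _ j0 A S Aj0) => j Aj hmax.
exists j => //; have := fit2 hr Aj.
by rewrite (eq_bigl A) // => i; case Ai: (A i) => //=; apply: hmax.
Qed.

Lemma wsum_le (A : pred 'I_n) (B : 'I_n -> 'I_n -> bool) (r C1 : 'I_n -> R)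
  (hBd : forall j, B j j) (hB : forall l j : 'I_n, (l < j)%N -> B l j)
  (h1 : forall j, A j -> C1 j = r j + \sum_(l < n | A l && B j l && (l <= j)%N) (p l)%:R)
  (h2 : forall j, A j -> r j + \sum_(l < n | A l && B j l && (S l <= S j)) (p l)%:R <= Cj p S j) :
  \sum_(j < n | A j) (w j)%:R * C1 j <= \sum_(j < n | A j) (w j)%:R * Cj p S j.
Proof.
apply: le_trans (_ : \sum_(j < n | A j) (w j)%:R *
   (r j + \sum_(l < n | A l && B j l && (S l <= S j)) (p l)%:R) <= _); last first.
  by apply: ler_sum => j Aj; apply: ler_wpM2l; [apply: ler0n | apply: h2].
rewrite (eq_bigr (fun j => (w j)%:R * r j + (w j)%:R *
   \sum_(l < n | A l && B j l && (l <= j)%N) (p l)%:R)); last first.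
  by move=> j Aj; rewrite h1 // mulrDr.
rewrite [X in _ <= X](eq_bigr (fun j => (w j)%:R * r j + (w j)%:R *
   \sum_(l < n | A l && B j l && (S l <= S j)) (p l)%:R)); last first.
  by move=> j Aj; rewrite mulrDr.
rewrite !big_split /= lerD2l.
apply: (@pairwise A (fun l j : 'I_n => S l <= S j) B) => //.
  by move=> i j; apply: le_total.
Qed.
End Dom.


Lemma dominance (k : int) (mu : rat) (hmu : 0 <= mu) (S : 'I_n -> R) :
  feasible p T1 T2 k S ->
  [/\ tg (early p T1 S) (Dmax p S) n <= T1%:R,
      (forall j, ~~ early p T1 S j -> T2%:R - (sE (early p T1 S) j)%:R <= Dmax p S),
      feasible p T1 T2 k (fS (early p T1 S) (Dmax p S)) &
      objective p w mu (fS (early p T1 S) (Dmax p S)) <= objective p w mu S].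
Proof.
move=> [[h0 [hv hEL]] hk].
set E := early p T1 S; set D := Dmax p S.
have hD : 0 <= D by apply: Dmax_ge0.
have hSst : forall j : 'I_n, (Sst j)%:R - D <= S j.
  move=> j; have := le_Dmax S j; rewrite /Delta CstarNE SstS natrD pnE /Cj -/D.
  have := ler_norm ((Sst j)%:R + (p j)%:R - (S j + (p j)%:R)).
  rewrite distrC; lra.
have hL2 : forall j, ~~ E j -> (T2%:R : R) <= S j.
  move=> j hj; case: (hEL j) => // h; by move: hj; rewrite /E /early h.
have hsumE : forall b l, (l <= n)%N -> ((\sum_(b <= i < l) (if EnB E i then pn i else 0))%:R : R)
      = \sum_(i < n | E i && (b <= i)%N && (i < l)%N) (p i)%:R.
  by move=> b l hl; rewrite sum_range // natr_sum.
have hfit : tg E D n <= T1%:R.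
  rewrite tg_rep // hsumE //.
  set b := bg E D n.
  have hr : forall i, (E i && (b <= i)%N) -> Num.max 0 ((Sst b)%:R - D) <= S i.
    move=> i /andP[_ hbi]; rewrite ge_max h0 /=.
    apply: le_trans (hSst i); rewrite lerD2r ler_nat; exact: Sst_mono.
  have -> : \sum_(i < n | E i && (b <= i)%N && (i < n)%N) (p i)%:R =
            \sum_(i < n | E i && (b <= i)%N) ((p i)%:R : R).
    by apply: eq_bigl => i; rewrite ltn_ord andbT.
  case: (pickP (fun i => E i && (b <= i)%N)) => [j0 hj0|hnone].
    have [j /andP[Ej _] hj] := fitmax hv hr hj0.
    exact: le_trans hj Ej.
  rewrite big_pred0 // addr0.
  case: (bg_prop E D n) => [hb|/andP[hb1 hb2]].
    by rewrite /b hb /Sst big_geq // sub0r max_l ?oppr_le0 // ler0n.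
  have := hnone (Ordinal hb1); by rewrite /= -EnBE hb2 leqnn.
have hLdev : forall j, ~~ E j -> T2%:R - (sE E j)%:R <= D.
  move=> j hj.
  have hr : forall i, (~~ E i && (i <= j)%N) -> (T2%:R : R) <= S i.
    by move=> i /andP[h _]; apply: hL2.
  have [i /andP[Ei hij] hi] := fitmax hv hr (j0:=j) (introT andP (conj hj (leqnn j))).
  have := le_trans (ler_norm _) (le_Dmax S i); rewrite /Delta -/D CstarNE => hdi.
  have e1 : \sum_(i0 < n | ~~ E i0 && (i0 <= j)%N) ((p i0)%:R : R) = (sL E j.+1)%:R.
    by rewrite sum_predL ?ltn_ord // natr_sum.
  rewrite e1 in hi.
  have : ((Sst i.+1)%:R : R) <= (Sst j.+1)%:R by rewrite ler_nat; apply: Sst_mono.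
  rewrite -(sEL E j.+1) sES_L // natrD.
  lra.
have hfeas : feasible p T1 T2 k (fS E D).
  split; first exact: fS_valid.
  by apply: le_trans hk; apply: Dmax_fS.
split => //.
rewrite /objective; apply: lerD.
  by apply: ler_wpM2l; [rewrite ler0q | apply: Dmax_fS].
rewrite (bigID E) [X in _ <= X](bigID E) /=; apply: lerD.

- apply: (wsum_le (S := S) hv (B := fun j l => (bg E D j.+1 <= l)%N)
          (r := fun j => Num.max 0 ((Sst (bg E D j.+1))%:R - D))).
  + move=> j; exact: bg_ltS.
  + move=> l j hlj; exact: leq_trans (bg_le E D l.+1) hlj.
  + move=> j Ej; rewrite fC_E // tg_rep // hsumE ?ltn_ord //.
  + move=> j Ej; apply: fit2 => //.
      move=> i /andP[Ei hbi]; rewrite ge_max h0 /=.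
      apply: le_trans (hSst i); rewrite lerD2r ler_nat; exact: Sst_mono.
    by rewrite Ej bg_ltS.
- apply: (wsum_le (S := S) hv (B := fun _ _ => true) (r := fun _ => T2%:R)) => //.
  + move=> j Ej; rewrite fC_L // natrD sum_predL ?ltn_ord // natr_sum.
    by try (congr (_ + _); apply: eq_bigl => i; rewrite andbT).
  + move=> j Ej; apply: fit2 => //.
      by move=> i; rewrite andbT; apply: hL2.
    by rewrite Ej.
Qed.

Lemma tg_interp (E : pred 'I_n) (m : nat) (s : R) (hs0 : 0 <= s) (hs1 : s <= 1) l :
  exists (N : nat) (d : bool), [/\ tg E m%:R l = N%:R,
    tg E (m%:R + 1) l = N%:R - (d : nat)%:R & tg E (m%:R + s) l = N%:R - s * (d : nat)%:R].
Proof.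
elim: l => [|l [N [d [h0 h1 hs]]]]; first by exists 0%N, false; rewrite /= !subr0 ?mulr0 subr0.
rewrite /=; case: (EnB E l); last by exists N, d.
rewrite h0 h1 hs.
case: (ltnP (N + m) (Sst l)) => hx.
  exists ((Sst l - m) + pn l)%N, true.
  have hm : (m <= Sst l)%N by apply: leq_trans (leq_addl _ _) (ltnW hx).
  have hx' : (N%:R + m%:R + 1 : R) <= (Sst l)%:R.
    by rewrite -[1]/(1%:R) -!natrD ler_nat addn1.
  rewrite natrD natrB //.
  have hd0 : (0:R) <= (d : nat)%:R by apply: ler0n.
  have hd1 : ((d : nat)%:R : R) <= 1 by rewrite -[1]/(1%:R : R) ler_nat; case: (d).
  have hsd : 0 <= s * (d:nat)%:R <= s.
    apply/andP; split; first exact: mulr_ge0.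
    by rewrite -[X in _ <= X]mulr1; apply: ler_wpM2l.
  case/andP: hsd => hsd0 hsd1.
  split.
  - rewrite max_r; lra.
  - rewrite max_r /=; lra.
  - rewrite max_r /=; lra.
exists (N + pn l)%N, d.
have hx' : ((Sst l)%:R : R) <= N%:R + m%:R by rewrite -natrD ler_nat.
have hd0 : (0:R) <= (d : nat)%:R by apply: ler0n.
have hd1 : ((d : nat)%:R : R) <= 1 by rewrite -[1]/(1%:R : R) ler_nat; case: (d).
have hsd : 0 <= s * (d:nat)%:R <= s.
  apply/andP; split; first exact: mulr_ge0.
  by rewrite -[X in _ <= X]mulr1; apply: ler_wpM2l.
case/andP: hsd => hsd0 hsd1.
rewrite natrD; split.
- rewrite max_l; lra.
- rewrite max_l; lra.
- rewrite max_l; lra.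
Qed.

Definition Qi (s x0 x1 xs : R) := exists (a : nat) (d : bool),
  [/\ x0 = a%:R, x1 = a%:R + (d : nat)%:R & xs = a%:R + s * (d : nat)%:R].

Lemma Qi_max s (hs0 : 0 <= s) (hs1 : s <= 1) x0 x1 xs y0 y1 ys :
  Qi s x0 x1 xs -> Qi s y0 y1 ys -> Qi s (Num.max x0 y0) (Num.max x1 y1) (Num.max xs ys).
Proof.
move=> [a [d [-> -> ->]]] [b [e [-> -> ->]]].
have hd0 : (0:R) <= (d : nat)%:R by apply: ler0n.
have hd1 : ((d : nat)%:R : R) <= 1 by rewrite -[1]/(1%:R : R) ler_nat; case: (d).
have he0 : (0:R) <= (e : nat)%:R by apply: ler0n.
have he1 : ((e : nat)%:R : R) <= 1 by rewrite -[1]/(1%:R : R) ler_nat; case: (e).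
have hsd : 0 <= s * (d:nat)%:R <= s.
  apply/andP; split; first exact: mulr_ge0.
  by rewrite -[X in _ <= X]mulr1; apply: ler_wpM2l.
have hse : 0 <= s * (e:nat)%:R <= s.
  apply/andP; split; first exact: mulr_ge0.
  by rewrite -[X in _ <= X]mulr1; apply: ler_wpM2l.
case/andP: hsd => hsd0 hsd1; case/andP: hse => hse0 hse1.
case: (ltngtP a b) => hab.
- have h : (a%:R + 1 : R) <= b%:R by rewrite -[1]/(1%:R : R) -natrD ler_nat addn1.
  exists b, e; split; rewrite max_r //; lra.
- have h : (b%:R + 1 : R) <= a%:R by rewrite -[1]/(1%:R : R) -natrD ler_nat addn1.
  exists a, d; split; rewrite max_l //; lra.
- rewrite hab; exists b, (d || e); split; first by rewrite maxxx.
  + by case: (d); case: (e); rewrite /= ?addr0 ?maxxx //;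
      first [rewrite max_l; lra | rewrite max_r; lra].
  + by case: (d); case: (e); rewrite /= ?addr0 ?mulr0 ?mulr1 ?maxxx //;
      first [rewrite max_l; lra | rewrite max_r; lra].
Qed.

Lemma lez_addr1_of_lt (a k : int) : (a < k)%R -> (a + 1 <= k)%R.
Proof. by move=> h; rewrite -ltzD1 ltrD2r. Qed.

Lemma nat_abs (x y : nat) : exists a : nat, `|(x%:R : R) - y%:R| = a%:R.
Proof.
case: (leqP x y) => h.
  exists (y - x)%N; rewrite natrB // distrC ger0_norm // subr_ge0 ler_nat.
  exact: h.
exists (x - y)%N; rewrite natrB ?(ltnW h) // ger0_norm // subr_ge0 ler_nat.
exact: ltnW.
Qed.

Lemma disc (k : int) (mu : rat) (hmu : 0 <= mu) (E : pred 'I_n) (D : R) (hD : 0 <= D)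
  (hfit : tg E D n <= T1%:R) (hk : Dmax p (fS E D) <= k%:~R) :
  exists m : nat, [/\ tg E m%:R n <= T1%:R, Dmax p (fS E m%:R) <= k%:~R,
     objective p w mu (fS E m%:R) <= objective p w mu (fS E D) & (m <= Num.truncn D + 1)%N].
Proof.
set m := Num.truncn D.
have /andP[hm1 hm2] := truncn_itv hD.
rewrite -/m in hm1 hm2.
set s := D - m%:R.
have hs0 : 0 <= s by rewrite /s subr_ge0.
have hs1 : s < 1 by rewrite /s -natr1 in hm2 *; lra.
have eD : D = m%:R + s by rewrite /s; ring.
case: (eqVneq s 0) => hs.
  exists m; rewrite eD hs addr0 in hfit hk *; split => //; exact: leq_addr.
have hsp : 0 < s by rewrite lt_neqAle eq_sym hs hs0.
have hs1' : s <= 1 by apply: ltW.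
rewrite eD in hfit hk *.
have hm0 : (0 : R) <= m%:R by apply: ler0n.
have hm01 : (0 : R) <= m%:R + 1 by lra.
have hC : forall j, exists (N : nat) (d : bool),
   [/\ Cj p (fS E m%:R) j = N%:R, Cj p (fS E (m%:R + 1)) j = N%:R - (d:nat)%:R,
       Cj p (fS E (m%:R + s)) j = N%:R - s * (d:nat)%:R &
       (E j -> N%:R <= (Sst j.+1)%:R :> R)].
  move=> j; case Ej: (E j).
    have [N [d [h0 h1 h2]]] := tg_interp E m hs0 hs1' j.+1.
    exists N, d; rewrite !fC_E // h0 h1 h2; split => // _.
    by rewrite -h0; apply: tg_le_Sst.
  exists (T2 + sL E j.+1)%N, false; rewrite !fC_L ?Ej //= mulr0 !subr0; split => //.
have hQ : Qi s (Dmax p (fS E m%:R)) (Dmax p (fS E (m%:R + 1))) (Dmax p (fS E (m%:R + s))).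
  rewrite /Dmax; apply: (big_ind3 (Qi s)).
  - by exists 0%N, false; rewrite /= mulr0 !addr0.
  - by move=> ? ? ? ? ? ?; apply: Qi_max.
  move=> j _; rewrite /Delta CstarNE.
  have [N [d [h0 h1 h2 h3]]] := hC j.
  case Ej: (E j).
    have hN := h3 Ej.
    have hNn : (N <= Sst j.+1)%N by rewrite -(ler_nat R).
    exists (Sst j.+1 - N)%N, d; rewrite natrB // h0 h1 h2.
    have hd0 : (0:R) <= (d : nat)%:R by apply: ler0n.
    have hsd : 0 <= s * (d:nat)%:R by apply: mulr_ge0.
    rewrite !ler0_norm; try lra; split; lra.
  have [a ha] := nat_abs (T2 + sL E j.+1) (Sst j.+1).
  move: h0 h1 h2; rewrite !fC_L ?Ej // => _ _ _.
  by exists a, false; rewrite /= mulr0 !addr0 ha.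
have [A [dd [hA0 hA1 hAs]]] := hQ.
have hdd0 : (0:R) <= (dd : nat)%:R by apply: ler0n.
have hdd1 : ((dd : nat)%:R : R) <= 1 by rewrite -[1]/(1%:R : R) ler_nat; case: (dd).
have hobj : objective p w mu (fS E (m%:R + s)) =
   (1 - s) * objective p w mu (fS E m%:R) + s * objective p w mu (fS E (m%:R + 1)).
  rewrite /objective hA0 hA1 hAs !mulrDr !big_distrr /=.
  have -> : \sum_(j < n) (w j)%:R * Cj p (fS E (m%:R + s)) j =
     \sum_(j < n) ((1 - s) * ((w j)%:R * Cj p (fS E m%:R) j) +
                   s * ((w j)%:R * Cj p (fS E (m%:R + 1)) j)).
    apply: eq_bigr => j _; have [N [d [h0 h1 h2 _]]] := hC j.
    rewrite h0 h1 h2; ring.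
  rewrite big_split /=; ring.
have [N [d [h0 h1 h2]]] := tg_interp E m hs0 hs1' n.
have hd0 : (0:R) <= (d : nat)%:R by apply: ler0n.
have hd1 : ((d : nat)%:R : R) <= 1 by rewrite -[1]/(1%:R : R) ler_nat; case: (d).
have hN : N%:R <= (T1%:R : R).
  have : (N%:R : R) < T1%:R + 1.
    rewrite h2 in hfit.
    have : s * (d:nat)%:R < 1.
      case: (d) hd0 hd1 => /=; rewrite ?mulr1 ?mulr0 //; lra.
    lra.
  by rewrite -[1]/(1%:R : R) -natrD ltr_nat addn1 ltnS ler_nat.
have hfit0 : tg E m%:R n <= T1%:R by rewrite h0.
have hfit1 : tg E (m%:R + 1) n <= T1%:R by rewrite h1; lra.
have hk0 : Dmax p (fS E m%:R) <= k%:~R.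
  apply: le_trans hk; rewrite hA0 hAs; have : 0 <= s * (dd:nat)%:R by apply: mulr_ge0.
  lra.
have hk1 : Dmax p (fS E (m%:R + 1)) <= k%:~R.
  rewrite hA1; move: hk; rewrite hAs.
  case: (dd) hdd0 hdd1 => /=; last by rewrite !mulr0 !addr0.
  rewrite mulr1 => _ _ hk'.
  have : (A%:R : R) < k%:~R by lra.
  have -> : (A%:R : R) = (A%:Z)%:~R by [].
  rewrite ltr_int => hlt.
  have hle : ((A + 1)%:Z <= k)%R by move: hlt; rewrite -addn1 PoszD; apply: lez_addr1_of_lt.
  have -> : (A%:R + 1 : R) = ((A + 1)%:Z)%:~R by rewrite -[1]/(1%:R : R) -natrD.
  by rewrite ler_int.
have e1 : (m.+1%:R : R) = m%:R + 1 by rewrite -natr1.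
case: (lerP (objective p w mu (fS E m%:R)) (objective p w mu (fS E (m%:R + 1)))) => ho.
  exists m; split => //; last exact: leq_addr.
  rewrite hobj; have : 0 <= s * (objective p w mu (fS E (m%:R + 1)) - objective p w mu (fS E m%:R)).
    by apply: mulr_ge0 => //; rewrite subr_ge0.
  lra.
exists m.+1; rewrite e1; split => //; last by rewrite addn1.
rewrite hobj; have : 0 <= (1 - s) * (objective p w mu (fS E m%:R) - objective p w mu (fS E (m%:R + 1))).
  by apply: mulr_ge0; [lra | rewrite subr_ge0; apply: ltW].
lra.
Qed.

Lemma tg_agree (E E' : pred 'I_n) (D : R) l :
  (forall i, (i < l)%N -> EnB E i = EnB E' i) -> tg E D l = tg E' D l.
Proof.
elim: l => [|l IH] h //=.
rewrite IH; last by move=> i hi; apply: h; apply: ltnW.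
by rewrite h.
Qed.

Lemma tg_agree_from (E E' : pred 'I_n) (D : R) l0 :
  tg E D l0 = tg E' D l0 -> (forall i, (l0 <= i)%N -> EnB E i = EnB E' i) ->
  forall l, (l0 <= l)%N -> tg E D l = tg E' D l.
Proof.
move=> h0 h l /subnK <-; elim: (l - l0)%N => [|t IH] //.
by rewrite addSn /= IH h // leq_addl.
Qed.

Lemma tg_prev (E : pred 'I_n) (D : R) l :
  tg E D l = 0 \/ exists2 i : 'I_n, E i && (i < l)%N & tg E D l = tg E D i.+1.
Proof.
elim: l => [|l IH]; first by left.
case e: (EnB E l).
  have hl := EnB_lt e.
  have [i hi] : exists i : 'I_n, nat_of_ord i = l by exists (Ordinal hl).
  right; exists i; last by rewrite hi.
  by rewrite -EnBE hi e ltnSn.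
rewrite /= e; case: IH => [->|[i /andP[h1 h2] h3]]; first by left.
right; exists i; last exact: h3.
by rewrite h1 ltnS ltnW.
Qed.

Lemma anchor (E : pred 'I_n) (D : R) (j0 : nat) :
  tg E D j0 <= (Sst j0)%:R - D ->
  forall l, (j0 <= l)%N -> tg E D l <= (Sst l)%:R - D.
Proof.
move=> h0 l /subnK <-; elim: (l - j0)%N => [|t IH] //.
rewrite addSn /= SstS natrD; case: (EnB E _).
  by rewrite max_r //; lra.
have := ler0n R (pn (t + j0)); lra.
Qed.

Lemma anchor_eq (E : pred 'I_n) (D : R) (j0 : nat) :
  tg E D j0 <= (Sst j0)%:R - D ->
  forall l, (j0 <= l)%N -> EnB E l -> tg E D l.+1 = (Sst l.+1)%:R - D.
Proof.
move=> h0 l hl e; rewrite /= e SstS natrD max_r; first by lra.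
exact: anchor hl.
Qed.

Lemma bigmax_attain (P : pred 'I_n) (F : 'I_n -> R) (c : R) :
  0 < c -> c <= \big[Num.max/0]_(i | P i) F i -> exists2 i, P i & c <= F i.
Proof.
move=> hc hle.
case: (pickP [pred i | P i && (c <= F i)]) => [i /andP[h1 h2]|hno]; first by exists i.
have : \big[Num.max/0]_(i | P i) F i < c.
  elim/big_ind: _ => //.
    by move=> x y hx hy; rewrite gt_max hx hy.
  move=> i Pi; rewrite ltNge; apply/negP => h; have := hno i; by rewrite /= Pi h.
by move=> h; move: hle; rewrite leNgt h.
Qed.

Lemma bigmaxT2_le (P : pred 'I_n) (F : 'I_n -> R) (c : R) :
  (T2%:R : R) <= c -> (forall i, P i -> F i <= c) -> \big[Num.max/T2%:R]_(i | P i) F i <= c.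
Proof.
move=> h0 h; elim/big_ind: _ => //.
by move=> x y hx hy; rewrite ge_max hx hy.
Qed.

Lemma le_bigmax0 (P : pred 'I_n) (F : 'I_n -> R) j : P j -> F j <= \big[Num.max/0]_(i | P i) F i.
Proof. by move=> Pj; rewrite (bigD1 j) //= le_max lexx. Qed.

Lemma disc_ivt (f : nat -> R) (x : R) N : f 0%N <= x -> x < f N ->
  exists2 i, (i < N)%N & f i <= x < f i.+1.
Proof.
elim: N => [|N IH] h0 hN; first by move: hN; rewrite ltNge h0.
case: (lerP (f N) x) => hx.
  by exists N => //; rewrite hx hN.
have [i hi h] := IH h0 hx; exists i => //; exact: ltnW.
Qed.

Lemma EnB_add (E : pred 'I_n) (mo : 'I_n) t :
  EnB (fun i => E i || (i == mo)) t = EnB E t || (t == mo).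
Proof.
rewrite /EnB; case: insubP => [i _ <-|] /=; first by [].
move=> h; apply/esym/negbTE; apply/eqP => e; move: h; by rewrite e ltn_ord.
Qed.

Section Props.
Variables (k : int) (mu : rat).
Hypothesis hmu : 0 <= mu.
Variables (E : pred 'I_n) (D : R).
Hypothesis hD : 0 <= D.
Hypothesis hfit : tg E D n <= T1%:R.
Hypothesis hL : forall j, ~~ E j -> T2%:R - (sE E j)%:R <= D.
Hypothesis hk : Dmax p (fS E D) <= k%:~R.
Hypothesis hopt : forall S', feasible p T1 T2 k S' ->
  objective p w mu (fS E D) <= objective p w mu S'.

Lemma Dmax_eq_anchor (j0 : 'I_n) : E j0 -> tg E D j0 <= (Sst j0)%:R - D ->
  Dmax p (fS E D) = D.
Proof.
move=> Ej0 ha; apply/le_anti/andP; split; first exact: Dmax_fS.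
apply: le_trans (le_Dmax _ j0).
rewrite dev_E // (anchor_eq ha (leqnn _)) ?EnBE //; lra.
Qed.

Lemma nogap (j0 j l : nat) : EnB E j0 -> tg E D j0 <= (Sst j0)%:R - D ->
  EnB E j -> (j0 < l)%N -> (l < j)%N -> EnB E l.
Proof.
move=> Ej0 ha Ej hl0 hlj; apply/idPn => nEl.
have ex1 : exists t, (j0 < t)%N && ~~ EnB E t by exists l; rewrite hl0.
case: (ex_minnP ex1) => mm /andP[hmm0 nEmm] hmmmin.
have hmml : (mm <= l)%N by apply: hmmmin; rewrite hl0.
have ex2 : exists t, (mm < t)%N && EnB E t.
  by exists j; rewrite Ej andbT; apply: leq_ltn_trans hmml hlj.
case: (ex_minnP ex2) => jj /andP[hjj0 Ejj] hjjmin.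
have hjjn := EnB_lt Ejj.
have hmmn : (mm < n)%N by apply: ltn_trans hjj0 hjjn.
set mo := Ordinal hmmn.
set E' := fun i : 'I_n => E i || (i == mo).
have hE' : forall t, EnB E' t = EnB E t || (t == mm) by move=> t; rewrite EnB_add.
have hin : forall t, (j0 <= t)%N -> (t < mm)%N -> EnB E t.
  move=> t h1 h2; case: (ltngtP j0 t) h1 => [h|h|<-] // _.
  apply/idPn => nt; have := hmmmin t; rewrite h nt /= => /(_ isT); rewrite leqNgt h2.
  by [].
have hmm1 : mm = (mm.-1).+1 by rewrite prednK //; apply: leq_ltn_trans (leq0n _) hmm0.
have h1 : tg E D mm = (Sst mm)%:R - D.
  have hpre : (j0 <= mm.-1)%N by rewrite -ltnS -hmm1.
  have hEpre : EnB E mm.-1 by apply: hin => //; rewrite {2}hmm1 ltnSn.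
  by have := anchor_eq ha hpre hEpre; rewrite -hmm1.
have h2 : tg E' D mm = tg E D mm.
  by apply/esym/tg_agree => i hi; rewrite hE'; have := ltn_eqF hi; move=> ->; rewrite orbF.
have h3 : tg E' D mm.+1 = (Sst mm.+1)%:R - D.
  rewrite /= hE' eqxx orbT h2 h1 maxxx SstS natrD; lra.
have h4 : forall d, (mm.+1 + d <= jj)%N ->
    tg E D (mm.+1 + d) = (Sst mm)%:R - D /\ tg E' D (mm.+1 + d) = (Sst mm.+1)%:R - D.
  elim=> [|d IH] hd.
    by rewrite addn0 (tgS_nE _ nEmm) h1 h3.
  move: hd; rewrite !addnS => hd.
  have [IH1 IH2] := IH (ltnW hd).
  have hnt : ~~ EnB E (mm.+1 + d).
    apply/negP => et; have := hjjmin (mm.+1 + d); rewrite et andbT ltnS leq_addr => /(_ isT).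
    by rewrite leqNgt hd.
  have hnt' : ~~ EnB E' (mm.+1 + d).
    rewrite hE' negb_or hnt /=; apply/eqP => e.
    have : (mm < mm.+1 + d)%N by rewrite ltnS leq_addr.
    by rewrite e ltnn.
  by rewrite (tgS_nE _ hnt) (tgS_nE _ hnt') IH1 IH2.
have hjjd : jj = (mm.+1 + (jj - mm.+1))%N by rewrite subnKC.
have hjjd' : (mm.+1 + (jj - mm.+1) <= jj)%N by rewrite -hjjd.
have [h5 h6] := h4 (jj - mm.+1)%N hjjd'.
rewrite -hjjd in h5 h6.
have h7 : tg E D jj.+1 = tg E' D jj.+1.
  have hs1 : (Sst mm <= Sst jj)%N by apply: Sst_mono; apply: ltnW.
  have hs2 : (Sst mm.+1 <= Sst jj)%N by apply: Sst_mono.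
  rewrite /= hE' Ejj /= h5 h6 !max_r //; rewrite lerD2r ler_nat //.
have h8 : forall t, (jj.+1 <= t)%N -> tg E D t = tg E' D t.
  move=> t ht; apply: (tg_agree_from h7 _ ht) => i hi; rewrite hE'.
  have : i != mm.
    by apply/eqP => e; move: hi; rewrite e => hi; have := ltn_trans hjj0 hi; rewrite ltnn.
  by move/negbTE => ->; rewrite orbF.
have h9 : tg E' D n = tg E D n by rewrite h8.
have hfit' : tg E' D n <= T1%:R by rewrite h9.
have hL' : forall j, ~~ E' j -> T2%:R - (sE E' j)%:R <= D.
  move=> i; rewrite /E' negb_or => /andP[nEi _].
  apply: le_trans (hL nEi); rewrite lerD2l lerN2 ler_nat /sE.
  apply: leq_sum => t _; rewrite hE'; case: (EnB E t) => //=; by case: (t == mm).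
have hj0 := EnB_lt Ej0.
have hEo : E (Ordinal hj0) by rewrite -EnBE.
have hao : tg E D (Ordinal hj0) <= (Sst (Ordinal hj0))%:R - D by exact: ha.
have hDm := Dmax_eq_anchor hEo hao.
have hDk : D <= k%:~R by rewrite -hDm.
have hfeas' : feasible p T1 T2 k (fS E' D).
  split; first exact: fS_valid.
  by apply: le_trans hDk; apply: Dmax_fS.
have := hopt hfeas'.
rewrite /objective.
have hmuD : ratr mu * Dmax p (fS E' D) <= ratr mu * Dmax p (fS E D).
  rewrite hDm.
  by apply: ler_wpM2l; [rewrite ler0q | apply: Dmax_fS].
suff : \sum_(j < n) (w j)%:R * Cj p (fS E' D) j < \sum_(j < n) (w j)%:R * Cj p (fS E D) j.
  lra.
rewrite (bigD1 mo) //= [X in _ < X](bigD1 mo) //=.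
apply: ltr_leD.
  rewrite ltr_pM2l ?ltr0n ?w_pos //.
  have nEmo : ~~ E mo by rewrite -EnBE.
  rewrite fC_E ?(fC_L _ nEmo) /E' ?eqxx ?orbT //.
  apply: le_lt_trans (tg_last _ _ _) _; rewrite h9.
  apply: le_lt_trans hfit _; rewrite ltr_nat; apply: leq_trans hT _; exact: leq_addr.
apply: ler_sum => i hi; apply: ler_wpM2l; first exact: ler0n.
case Ei: (E i).
  rewrite !fC_E ?Ei /E' ?Ei //.
  suff -> : tg E' D i.+1 = tg E D i.+1 by [].
  case: (ltnP i mm) => him.
    apply: tg_agree => t ht; rewrite hE'.
    have : t != mm by apply/eqP => e; move: ht; rewrite e ltnS leqNgt him.
    by move/negbTE => ->; rewrite orbF.
  have hjji : (jj <= i)%N.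
    apply: hjjmin; rewrite EnBE Ei andbT ltn_neqAle him andbT.
    apply/eqP => e; move: hi; have -> : i = mo by apply: val_inj.
    by rewrite eqxx.
  by apply/esym/h8.
have nE'i : ~~ E' i by rewrite /E' Ei /= hi.
rewrite (fC_L _ nE'i) fC_L ?Ei // ler_nat leq_add2l /sL.
apply: leq_sum => t _; rewrite hE'; case: (EnB E t) => //=; by case: (t == mm).
Qed.


Lemma S_lt_C (S : 'I_n -> R) j : S j < Cj p S j.
Proof. by rewrite /Cj ltrDl ltr0n. Qed.

Lemma startE_mono (u v : 'I_n) : E u -> E v -> (u < v)%N -> Cj p (fS E D) u <= fS E D v.
Proof.
move=> Eu Ev huv; rewrite fC_E // /fS Ev.
apply: le_trans (tg_mono E D huv) _; by rewrite le_max lexx.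
Qed.

Lemma fS_L (j : 'I_n) : ~~ E j -> fS E D j = (T2 + sL E j)%:R.
Proof. by move=> h; rewrite /fS (negbTE h). Qed.

Lemma fS_E (j : 'I_n) : E j -> fS E D j = Num.max (tg E D j) ((Sst j)%:R - D).
Proof. by move=> h; rewrite /fS h. Qed.

Lemma cEarlyE : cEarly p T1 (fS E D) = \big[Num.max/0]_(j | E j) Cj p (fS E D) j.
Proof. by apply: eq_bigl => j; rewrite (early_fS hD hfit). Qed.

Lemma idle_rel a b : idle_period p T1 (fS E D) a b ->
  exists j0 : 'I_n, [/\ E j0, fS E D j0 = b, tg E D j0 < (Sst j0)%:R - D & tg E D j0 <= a].
Proof.
case=> ha0 hab hbc hfree hmax.
have hb0 : 0 < b by apply: le_lt_trans ha0 hab.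
have hbc' : b <= \big[Num.max/0]_(j | E j) Cj p (fS E D) j by rewrite -cEarlyE.
have [j1 Ej1 hj1] := bigmax_attain hb0 hbc'.
have hbj1 : b <= fS E D j1.
  by case: (hfree j1) => // h; move: (le_trans hj1 h); rewrite leNgt hab.
pose J := fun i => E i && (b <= fS E D i).
have Jj1 : J j1 by rewrite /J Ej1 hbj1.
case: (@arg_minP _ R _ j1 J (fS E D) Jj1) => jm /andP[Ejm hbjm] hmin.
have hjmT1 : Cj p (fS E D) jm <= T1%:R by rewrite -(early_fS hD hfit) in Ejm.
have hfree' : Defs.free p (fS E D) a (fS E D jm).
  move=> i; case: (hfree i) => [h|h]; first by left.
  right; case Ei: (E i).
    by apply: hmin; rewrite /J Ei h.
  rewrite [fS E D i]fS_L ?Ei //; apply: le_trans (ltW (S_lt_C (fS E D) jm)) _.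
  apply: le_trans hjmT1 _; rewrite ler_nat; apply: leq_trans (ltnW hT) _; exact: leq_addr.
have hjmc : fS E D jm <= cEarly p T1 (fS E D).
  rewrite cEarlyE; apply: le_trans (ltW (S_lt_C (fS E D) jm)) _; exact: le_bigmax0.
have [_ hjmb] := hmax a (fS E D jm) ha0 (lexx a) hbjm hjmc hfree'.
have hta : tg E D jm <= a.
  case: (tg_prev E D jm) => [->//|[i /andP[Ei hi] hti]].
  rewrite hti -fC_E //; case: (hfree i) => // h.
  have : fS E D i < b.
    apply: lt_le_trans (S_lt_C (fS E D) i) _; rewrite fC_E // -hti -hjmb fS_E //.
    by rewrite le_max lexx.
  by rewrite ltNge h.
exists jm; split => //.
move: hjmb; rewrite fS_E //; case: (leP ((Sst jm)%:R - D) (tg E D jm)) => h e //.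
by move: hab; rewrite -e ltNge hta.
Qed.

Lemma released_anchor (j : 'I_n) : tg E D j < (Sst j)%:R - D -> tg E D j <= (Sst j)%:R - D.
Proof. exact: ltW. Qed.

Lemma anchor_later (j0 j1 : 'I_n) : E j0 -> tg E D j0 <= (Sst j0)%:R - D -> E j1 ->
  (j0 < j1)%N -> tg E D j1 = (Sst j1)%:R - D.
Proof.
move=> Ej0 ha Ej1 hlt.
have hj1 : nat_of_ord j1 = (j1.-1).+1 by rewrite prednK //; apply: leq_ltn_trans (leq0n _) hlt.
have hpre : (j0 <= j1.-1)%N by rewrite -ltnS -hj1.
have hE : EnB E j1.-1.
  case: (ltngtP j0 j1.-1) hpre => [h|h|<-] // _; last by rewrite EnBE.
  apply: (nogap (j0 := j0) (j := j1)); rewrite ?EnBE //.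
  by rewrite {2}hj1 ltnSn.
by have := anchor_eq ha hpre hE; rewrite -hj1.
Qed.

Lemma idle_unique a b a' b' : idle_period p T1 (fS E D) a b ->
  idle_period p T1 (fS E D) a' b' -> a = a' /\ b = b'.
Proof.
move=> hi hi'.
have [j0 [Ej0 hb hrel _]] := idle_rel hi.
have [j1 [Ej1 hb' hrel' _]] := idle_rel hi'.
case: (ltngtP j0 j1) => h.
- have := anchor_later Ej0 (ltW hrel) Ej1 h; move: hrel'.
  by move=> h1 h2; move: h1; rewrite h2 ltxx.
- have := anchor_later Ej1 (ltW hrel') Ej0 h; move: hrel.
  by move=> h1 h2; move: h1; rewrite h2 ltxx.
have ej : j0 = j1 by apply: val_inj.
have ebb : b = b' by rewrite -hb -hb' ej.
split => //.
case: hi => ha0 hab hbc hfree hmax; case: hi' => ha0' hab' hbc' hfree' hmax'.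
rewrite -ebb in hbc' hfree' hmax'.
case: (lerP a a') => haa.
  by have [-> _] := hmax' a b ha0 haa (lexx b) hbc hfree.
by have [-> _] := hmax a' b ha0' (ltW haa) (lexx b) hbc hfree'.
Qed.

Lemma after_idle (j0 j : 'I_n) : E j0 -> E j -> fS E D j0 <= fS E D j -> (j0 <= j)%N.
Proof.
move=> Ej0 Ej h; rewrite leqNgt; apply/negP => hlt.
have := startE_mono Ej Ej0 hlt; have := S_lt_C (fS E D) j; lra.
Qed.

Lemma idle_props a b : idle_period p T1 (fS E D) a b ->
  [/\ (forall j, early p T1 (fS E D) j -> b <= fS E D j ->
          (CstarN p j)%:R - Cj p (fS E D) j = Dmax p (fS E D)),
      (forall i j l : 'I_n, (i <= l)%N -> (l <= j)%N ->
          early p T1 (fS E D) i -> b <= fS E D i -> early p T1 (fS E D) j -> b <= fS E D j ->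
          early p T1 (fS E D) l /\ b <= fS E D l) &
      (forall j, early p T1 (fS E D) j -> b <= fS E D j ->
          (forall i, early p T1 (fS E D) i -> b <= fS E D i -> fS E D j <= fS E D i) ->
          (T2 <= SstarN p j)%N)].
Proof.
move=> hi; have [j0 [Ej0 hb hrel hta]] := idle_rel hi.
have ha := ltW hrel.
have hDm := Dmax_eq_anchor Ej0 ha.
have hafter : forall j, E j -> b <= fS E D j -> (j0 <= j)%N.
  by move=> j Ej hj; apply: after_idle => //; rewrite hb.
split.
- move=> j; rewrite (early_fS hD hfit) => Ej hj.
  rewrite hDm CstarNE fC_E // (anchor_eq ha) ?EnBE //; first lra.
  exact: hafter.
- move=> i j l hil hlj; rewrite !(early_fS hD hfit) => Ei hbi Ej hbj.
  have hi0 := hafter i Ei hbi.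
  have El : E l.
    case: (ltngtP j0 l) => [h|h|e]; last by rewrite -(val_inj e).
    + case: (ltngtP l j) => [h'|h'|e]; last by rewrite (val_inj e).
      * by rewrite -EnBE; apply: (nogap (j0 := j0) (j := j)); rewrite ?EnBE.
      * by move: hlj; rewrite leqNgt h'.
    + by move: h; rewrite ltnNge (leq_trans hi0 hil).
  split => //.
  case: (ltngtP j0 l) => [h|h|e].
  + rewrite -hb; have := startE_mono Ej0 El h; have := S_lt_C (fS E D) j0; lra.
  + by move: h; rewrite ltnNge (leq_trans hi0 hil).
  + by rewrite -hb (val_inj e).
- move=> j; rewrite (early_fS hD hfit) => Ej hbj _.
  have hj0 := hafter j Ej hbj.
  rewrite SstarNE; apply: leq_trans (Sst_mono hj0); rewrite leqNgt; apply/negP => hlt.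
  have hSj0 : fS E D j0 = (Sst j0)%:R - D.
    by rewrite fS_E // max_r //; apply: ltW.
  case: (boolP [exists f : 'I_n, (f < j0)%N && ~~ E f]) => [/existsP[f /andP[hf nEf]]|hno].
    have := hL nEf.
    have hsE : ((sE E f)%:R : R) <= (sE E j0)%:R by rewrite ler_nat; apply: sE_mono; apply: ltnW.
    have := tg_ge_sE E D j0.
    have : ((Sst j0)%:R : R) < T2%:R by rewrite ltr_nat.
    lra.
  have hsE : sE E j0 = Sst j0.
    rewrite /sE /Sst; apply: eq_big_nat => i /andP[_ hii].
    have hin : (i < n)%N by apply: ltn_trans hii (ltn_ord j0).
    have -> : EnB E i.
      apply/negPn/negP => nEi; move/negP: hno; apply; apply/existsP.
      by exists (Ordinal hin); rewrite /= hii -EnBE.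
    by [].
  have := tg_ge_sE E D j0; rewrite hsE; have := hD; lra.
Qed.

Lemma no_later_idle : ~ later_idles p T2 (fS E D).
Proof.
move=> [x [y [hx hxy hyc hfree]]].
have hcl : cLater p T2 (fS E D) <= (T2 + sL E n)%:R.
  apply: bigmaxT2_le; first by rewrite ler_nat leq_addr.
  move=> j; rewrite (later_fS hD hfit) => nEj; rewrite fC_L // ler_nat leq_add2l.
  by apply: sL_mono; apply: ltn_ord.
have h0 : ((T2 + sL E 0)%:R : R) <= x by rewrite /sL big_geq // addn0.
have hxn : x < (T2 + sL E n)%:R by apply: lt_le_trans hxy (le_trans hyc hcl).
have [i hin /andP[hi1 hi2]] := disc_ivt (f := fun t => (T2 + sL E t)%:R) h0 hxn.
have nEi : ~~ EnB E i.
  apply/negP => e; move: hi2; rewrite sLS e addn0 ltNge hi1.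
  by [].
have [io hio] : exists io : 'I_n, nat_of_ord io = i by exists (Ordinal hin).
have nEio : ~~ E io by rewrite -EnBE hio.
case: (hfree io).
  by rewrite fC_L // hio => h; move: hi2; rewrite ltNge h.
rewrite fS_L // hio => h; have := le_trans h hi1; rewrite leNgt hxy.
by [].
Qed.

Lemma later_first j : later p T2 (fS E D) j ->
  (forall i, later p T2 (fS E D) i -> fS E D j <= fS E D i) ->
  forall i, later p T2 (fS E D) i -> Delta p (fS E D) i <= Delta p (fS E D) j.
Proof.
rewrite (later_fS hD hfit) => nEj hmin i; rewrite (later_fS hD hfit) => nEi.
rewrite (dev_L hD hfit nEi) (dev_L hD hfit nEj) lerD2l lerN2 ler_nat.
case: (leqP j i) => h; first exact: sE_mono.
have := hmin i; rewrite (later_fS hD hfit) nEi => /(_ isT).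
rewrite !fS_L // ler_nat leq_add2l => hle.
have : (sL E i.+1 <= sL E j)%N by apply: sL_mono.
rewrite sLS_L // => h2; have := p_pos i.
move=> hp; have := leq_trans h2 hle; rewrite -{2}(addn0 (sL E i)) leq_add2l leqn0 => /eqP hp0.
by move: hp; rewrite hp0.
Qed.

Lemma early_le j : early p T1 (fS E D) j -> Cj p (fS E D) j <= (CstarN p j)%:R.
Proof.
rewrite (early_fS hD hfit) => Ej; rewrite fC_E // CstarNE; exact: tg_le_Sst.
Qed.

End Props.

Lemma trunc_bound (t : nat) (k : int) : (t%:Z <= k)%R -> (t <= `|k|)%N.
Proof. by lia. Qed.

Lemma main_inner (k : int) (mu : rat) (hmu : 0 <= mu)
  (hfeas : exists S : 'I_n -> R, feasible p T1 T2 k S) :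
  exists S : 'I_n -> R,
    optimal p w T1 T2 k mu S /\
    [/\ (forall j, early p T1 S j -> Cj p S j <= (CstarN p j)%:R),
        (forall a b a' b', idle_period p T1 S a b -> idle_period p T1 S a' b' ->
           a = a' /\ b = b'),
        (forall a b, idle_period p T1 S a b ->
           [/\ (forall j, early p T1 S j -> b <= S j ->
                  (CstarN p j)%:R - Cj p S j = Dmax p S),
               (forall i j l : 'I_n, (i <= l)%N -> (l <= j)%N ->
                  early p T1 S i -> b <= S i -> early p T1 S j -> b <= S j ->
                  early p T1 S l /\ b <= S l) &
               (forall j, early p T1 S j -> b <= S j ->
                  (forall i, early p T1 S i -> b <= S i -> S j <= S i) ->
                  (T2 <= SstarN p j)%N)]),
        ~ later_idles p T2 S &
        (forall j, later p T2 S j ->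
           (forall i, later p T2 S i -> S j <= S i) ->
           forall i, later p T2 S i -> Delta p S i <= Delta p S j)].
Proof.
pose K := (`|k|%N + 2)%N.
pose cand (x : {ffun 'I_n -> bool} * 'I_K) := fS (fun j => x.1 j) (x.2 : nat)%:R.
pose Pf (x : {ffun 'I_n -> bool} * 'I_K) :=
  (tg (fun j => x.1 j) (x.2 : nat)%:R n <= T1%:R) && (Dmax p (cand x) <= k%:~R).
pose F (x : {ffun 'I_n -> bool} * 'I_K) := objective p w mu (cand x).
have reach : forall S, feasible p T1 T2 k S -> exists2 x, Pf x & F x <= objective p w mu S.
  move=> S hS.
  have [hfit hL [hv hk'] hobj] := dominance hmu hS.
  have hD := Dmax_ge0 S.
  have [m [hm1 hm2 hm3 hm4]] := disc hmu hD hfit hk'.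
  have hmK : (m < K)%N.
    apply: leq_ltn_trans hm4 _; rewrite addn1 /K addn2 !ltnS.
    apply: trunc_bound; rewrite -(ler_int R).
    have /andP[ht _] := truncn_itv hD.
    apply: le_trans ht _; apply: le_trans (proj2 hS).
    by [].
  exists ([ffun j => early p T1 S j], Ordinal hmK).
    have hE : (fun j => ([ffun j => early p T1 S j], Ordinal hmK).1 j) = early p T1 S.
      by apply: functional_extensionality => j; rewrite ffunE.
    by rewrite /Pf /cand hE /= hm1 hm2.
  have hE : (fun j => ([ffun j => early p T1 S j], Ordinal hmK).1 j) = early p T1 S.
    by apply: functional_extensionality => j; rewrite ffunE.
  by rewrite /F /cand hE /=; apply: le_trans hm3 hobj.
have [S0 hS0] := hfeas.
have [x0 Px0 _] := reach S0 hS0.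
case: (@arg_minP _ R _ x0 Pf F Px0) => xo /andP[Pxo1 Pxo2] hmin.
set So := cand xo.
have hSo : feasible p T1 T2 k So.
  split => //; apply: fS_valid => //; exact: ler0n.
have hoptSo : forall S', feasible p T1 T2 k S' -> objective p w mu So <= objective p w mu S'.
  move=> S' hS'; have [x' Px' hx'] := reach S' hS'.
  exact: le_trans (hmin x' Px') hx'.
have [hfit hL hfeas' hobj] := dominance hmu hSo.
set E := early p T1 So; set D := Dmax p So.
have hD : 0 <= D by apply: Dmax_ge0.
have hk : Dmax p (fS E D) <= k%:~R by case: hfeas'.
have hopt : forall S', feasible p T1 T2 k S' -> objective p w mu (fS E D) <= objective p w mu S'.
  by move=> S' hS'; apply: le_trans hobj (hoptSo S' hS').
exists (fS E D); split; first by split.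
split.
- exact: (early_le hmu hD hfit hL hk hopt).
- exact: (idle_unique hmu hD hfit hL hk hopt).
- exact: (idle_props hmu hD hfit hL hk hopt).
- exact: (no_later_idle hmu hD hfit hL hk hopt).
- exact: (later_first hmu hD hfit hL hk hopt).
Qed.

End Aux.

Theorem lemma2 (R : realType) (n : nat) (p w : 'I_n -> nat) (T1 T2 : nat)
  (k : int) (mu : rat)
  (p_pos : forall j, (0 < p j)%N) (w_pos : forall j, (0 < w j)%N)
  (wspt : forall i j : 'I_n, (i <= j)%N -> (p i * w j <= p j * w i)%N)
  (hT : (T1 < T2)%N) (hmu : 0 <= mu)
  (hex : exists j, (T1 < CstarN p j)%N)
  (hpmin : exists j, (p j <= T1)%N)
  (hP : (T1 < Ptot p)%N)
  (hj1 : forall j1 : 'I_n, (T1 < CstarN p j1)%N ->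
           (forall i : 'I_n, (i < j1)%N -> (CstarN p i <= T1)%N) ->
           (T2%:Z - (SstarN p j1)%:Z <= k)%R)
  (hfeas : exists S : 'I_n -> R, feasible p T1 T2 k S) :
  exists S : 'I_n -> R,
    optimal p w T1 T2 k mu S /\
    [/\         (* (a) *)
        (forall j, early p T1 S j -> Cj p S j <= (CstarN p j)%:R),
        (* (b) at most one idle period *)
        (forall a b a' b', idle_period p T1 S a b -> idle_period p T1 S a' b' ->
           a = a' /\ b = b'),
        (* (c),(d),(e) for the idle period, if any *)
        (forall a b, idle_period p T1 S a b ->
           [/\ (forall j, early p T1 S j -> b <= S j ->
                  (CstarN p j)%:R - Cj p S j = Dmax p S),
               (forall i j l : 'I_n, (i <= l)%N -> (l <= j)%N ->
                  early p T1 S i -> b <= S i -> early p T1 S j -> b <= S j ->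
                  early p T1 S l /\ b <= S l) &
               (forall j, early p T1 S j -> b <= S j ->
                  (forall i, early p T1 S i -> b <= S i -> S j <= S i) ->
                  (T2 <= SstarN p j)%N)]),
        (* (f) *)
        ~ later_idles p T2 S &
        (* (g) *)
        (forall j, later p T2 S j ->
           (forall i, later p T2 S i -> S j <= S i) ->
           forall i, later p T2 S i -> Delta p S i <= Delta p S j)].
Proof.
exact: (main_inner p_pos w_pos wspt hT hmu hfeas).
Qed.
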